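(* Let $g=e^{-\psi}\colon\mathbb R^d\to[0,+\infty)$ satisfy the Basic Assumptions, let $m=\min\psi$, and assume $\psi(0)<m+1$. Then $\operatorname{supp}g$ is a star-like set with respect to $g$. Moreover, if $U\subset\mathbb R^d$ satisfies $\inf_{x\in U\cap\operatorname{supp}g}g(x)>0$, then the set $\{((u,g(u)),\bar v)\in\widetilde{\mathcal{CP}}(g,g):u\in U\}$ is bounded in $\mathbb R^{d+1}\times\mathbb R^{d+1}$.
   Context: $\operatorname{supp}g=\{x:g(x)>0\}$. Basic Assumptions: $g$ upper semi-continuous, log-concave, with finite positive integral, $\operatorname{supp}g$ bounded, origin in interior of $\operatorname{supp}g$. Lifting $\mathrm{lift}(f)=\{(x,y)\in\mathbb R^d\times\mathbb R:x\in\overline{\operatorname{supp}f},|y|\le f(x)\}$. Fréchet normal cone $N_A(a_0)=\{v:\forall\varepsilon>0\,\exists\delta>0:\langle v,a-a_0\rangle\le\varepsilon|a-a_0|\ \forall a\in A,|a-a_0|\le\delta\}$. Contact pairs $\mathcal{CP}(f,g)=\{(\bar u,\bar v):\bar u=(u,f(u)),u\in\overline{\operatorname{supp}f}\cap\overline{\operatorname{supp}g},f(u)=g(u),\bar v\in N_{\mathrm{lift}(f)}(\bar u)\cap N_{\mathrm{lift}(g)}(\bar u),\langle\bar v,\bar u\rangle=1\}$; reduced set $\widetilde{\mathcal{CP}}(f,g)$: those pairs with $f(u)\ne0$, or with $f(u)=g(u)=0$ and $\bar v=(v,0)$. Star-like: $U$ is star-like w.r.t. $g$ if for every $u\in U\cap\operatorname{supp}g$,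 $\langle(u,g(u)),\bar v\rangle>0$ for all nonzero $\bar v\in N_{\mathrm{lift}(g)}((u,g(u)))$. *)

(* Defs.v *)
(* Points of R^d are row vectors 'rV[R]_d,
   R : realType; points of R^(d+1) = R^d x R are pairs ('rV[R]_d * R). *)
From HB Require Import structures.
From mathcomp Require Import all_boot all_order all_algebra.
From mathcomp Require Import all_classical all_reals all_analysis.
Set Implicit Arguments. Unset Strict Implicit. Unset Printing Implicit Defensive.
Import Order.TTheory GRing.Theory Num.Theory.
Import numFieldNormedType.Exports.
Local Open Scope classical_set_scope.
Local Open Scope ring_scope.

Section Defs.
Variable R : realType.

Definition vdot (d : nat) (u v : 'rV[R]_d) : R := \sum_(i < d) u 0 i * v 0 i.
Definition vnorm (d : nat) (u : 'rV[R]_d) : R := Num.sqrt (vdot u u).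

Definition pt (d : nat) := ('rV[R]_d * R)%type.
Definition pdot (d : nat) (p q : pt d) : R := vdot p.1 q.1 + p.2 * q.2.
Definition pnorm (d : nat) (p : pt d) : R := Num.sqrt (pdot p p).
Definition psub (d : nat) (p q : pt d) : pt d := (p.1 - q.1, p.2 - q.2).

Definition supp (d : nat) (g : 'rV[R]_d -> R) : set 'rV[R]_d := [set x | 0 < g x].
Definition lift (d : nat) (f : 'rV[R]_d -> R) : set (pt d) :=
  [set p | closure (supp f) p.1 /\ `|p.2| <= f p.1].

Definition frechet_normal (d : nat) (A : set (pt d)) (a0 : pt d) : set (pt d) :=
  [set v | forall eps : R, 0 < eps -> exists2 delta : R, 0 < delta &
     forall a, A a -> pnorm (psub a a0) <= delta ->
       pdot v (psub a a0) <= eps * pnorm (psub a a0)].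

Definition contact_pairs (d : nat) (f g : 'rV[R]_d -> R) : set (pt d * pt d) :=
  [set uv | exists u : 'rV[R]_d,
     uv.1 = (u, f u) /\ closure (supp f) u /\ closure (supp g) u /\ f u = g u /\
     frechet_normal (lift f) uv.1 uv.2 /\
     frechet_normal (lift g) uv.1 uv.2 /\ pdot uv.2 uv.1 = 1].

Definition reduced_contact_pairs (d : nat) (f g : 'rV[R]_d -> R)
  : set (pt d * pt d) :=
  [set uv | contact_pairs f g uv /\
     (f uv.1.1 != 0 \/ (f uv.1.1 = 0 /\ g uv.1.1 = 0 /\ uv.2.2 = 0))].

Definition star_like (d : nat) (U : set 'rV[R]_d) (g : 'rV[R]_d -> R) : Prop :=
  forall u, U u -> supp g u ->
    forall v : pt d, v != (0, 0) -> frechet_normal (lift g) (u, g u) v ->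
      0 < pdot (u, g u) v.

Definition upper_semicontinuous (d : nat) (g : 'rV[R]_d -> R) : Prop :=
  forall x, forall eps : R, 0 < eps -> exists2 delta : R, 0 < delta &
    forall y, vnorm (y - x) < delta -> g y < g x + eps.

Definition log_concave (d : nat) (g : 'rV[R]_d -> R) : Prop :=
  forall x y (l : R), 0 <= l <= 1 ->
    (g x) `^ l * (g y) `^ (1 - l) <= g (l *: x + (1 - l) *: y).

Definition bounded_set (d : nat) (A : set 'rV[R]_d) : Prop :=
  exists M : R, forall x, A x -> vnorm x <= M.

(* Lebesgue integral over R^d, as the iterated (one-dimensional) Lebesgue
   integral; by Tonelli this is the Lebesgue integral for nonnegative
   measurable functions. *)
Definition vcons (d : nat) (t : R) (x : 'rV[R]_d) : 'rV[R]_d.+1 :=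
  \row_(i < d.+1) (if unlift ord0 i is Some j then x 0 j else t).

Fixpoint integral_Rd (d : nat) : ('rV[R]_d -> \bar R) -> \bar R :=
  match d return ('rV[R]_d -> \bar R) -> \bar R with
  | 0 => fun f => f 0
  | d'.+1 => fun f =>
      (\int[@lebesgue_measure R]_t integral_Rd (fun x : 'rV[R]_d' => f (vcons t x)))%E
  end.

Definition basic_assumptions (d : nat) (g : 'rV[R]_d -> R) : Prop :=
  (forall x, 0 <= g x) /\
  upper_semicontinuous g /\
  log_concave g /\
  (0 < integral_Rd (fun x => (g x)%:E) < +oo)%E /\
  bounded_set (supp g) /\
  interior (supp g) 0.

End Defs.

(* Main.v *)
Set Warnings "-all".
Require Import Defs.
From HB Require Import structures.
From mathcomp Require Import all_boot all_order all_algebra.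
From mathcomp Require Import all_classical all_reals all_analysis.
From mathcomp Require Import ring lra.
Import Order.TTheory GRing.Theory Num.Theory.
Import numFieldNormedType.Exports.
Local Open Scope classical_set_scope.
Local Open Scope ring_scope.
Set Implicit Arguments. Unset Strict Implicit. Unset Printing Implicit Defensive.

Section Aux.
Variable R : realType.
Implicit Types (d : nat).

Lemma vdotC d (u v : 'rV[R]_d) : vdot u v = vdot v u.
Proof. by rewrite /vdot; apply: eq_bigr => i _; rewrite mulrC. Qed.

Lemma vdotDr d (u v w : 'rV[R]_d) : vdot u (v + w) = vdot u v + vdot u w.
Proof. by rewrite /vdot -big_split; apply: eq_bigr => i _; rewrite mxE mulrDr. Qed.

Lemma vdotNr d (u v : 'rV[R]_d) : vdot u (- v) = - vdot u v.
Proof. by rewrite /vdot -sumrN; apply: eq_bigr => i _; rewrite mxE mulrN. Qed.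

Lemma vdotBr d (u v w : 'rV[R]_d) : vdot u (v - w) = vdot u v - vdot u w.
Proof. by rewrite vdotDr vdotNr. Qed.

Lemma vdotZr d (c : R) (u v : 'rV[R]_d) : vdot u (c *: v) = c * vdot u v.
Proof. by rewrite /vdot mulr_sumr; apply: eq_bigr => i _; rewrite mxE mulrCA. Qed.

Lemma vdot0r d (u : 'rV[R]_d) : vdot u 0 = 0.
Proof. by rewrite /vdot big1 // => i _; rewrite mxE mulr0. Qed.

Lemma vdot_ge0 d (u : 'rV[R]_d) : 0 <= vdot u u.
Proof. by rewrite /vdot sumr_ge0 // => i _; rewrite -expr2 sqr_ge0. Qed.

Lemma vdot_coord d (u : 'rV[R]_d) i : u 0 i ^+ 2 <= vdot u u.
Proof.
rewrite /vdot (bigD1 i) //= expr2 lerDl sumr_ge0 // => j _.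
by rewrite -expr2 sqr_ge0.
Qed.

Lemma vdot_delta d (c : R) (u : 'rV[R]_d) i :
  vdot u (c *: delta_mx 0 i) = c * u 0 i.
Proof.
rewrite vdotZr; congr (_ * _); rewrite /vdot (bigD1 i) //= big1.
  by rewrite mxE !eqxx mulr1 addr0.
by move=> j /negbTE ji; rewrite mxE ji andbF mulr0.
Qed.

Lemma pnorm_ge0 d (p : pt R d) : 0 <= pnorm p.
Proof. exact: sqrtr_ge0. Qed.

Lemma pnormZ d (s : R) (p : pt R d) : 0 <= s ->
  pnorm ((s *: p.1, s * p.2) : pt R d) = s * pnorm p.
Proof.
move=> s0; rewrite /pnorm /pdot /= vdotZr vdotC vdotZr.
have -> : s * (s * vdot p.1 p.1) + s * p.2 * (s * p.2) =
  s ^+ 2 * (vdot p.1 p.1 + p.2 * p.2) by ring.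
by rewrite sqrtrM ?sqr_ge0 // sqrtr_sqr ger0_norm.
Qed.

Lemma le0_of_eps (x c : R) : 0 <= c ->
  (forall e, 0 < e -> x <= e * c) -> x <= 0.
Proof.
move=> c0 H; rewrite leNgt; apply/negP => x0.
have := H (x / (c + 1)) (divr_gt0 x0 (ltr_wpDl c0 ltr01)).
have c1 : 0 < c + 1 by lra.
rewrite mulrAC ler_pdivlMr // => h; nra.
Qed.

Lemma normal_dir d (A : set (pt R d)) (a0 v p : pt R d) (s0 : R) :
  0 < s0 -> (forall s, 0 < s -> s <= s0 -> A (a0.1 + s *: p.1, a0.2 + s * p.2)) ->
  frechet_normal A a0 v -> pdot v p <= 0.
Proof.
move=> s00 HA Hv; apply: (le0_of_eps (pnorm_ge0 p)) => e e0.
have [del del0 Hd] := Hv e e0.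
have N1 : 0 < pnorm p + 1 by have := pnorm_ge0 p; lra.
set s := Num.min s0 (del / (pnorm p + 1)).
have s0p : 0 < s by rewrite lt_min s00 divr_gt0.
have ss0 : s <= s0 by rewrite ge_min lexx.
have sd : s <= del / (pnorm p + 1) by rewrite ge_min lexx orbT.
have Hps : psub (a0.1 + s *: p.1, a0.2 + s * p.2) a0 = (s *: p.1, s * p.2).
  by rewrite /psub /=; congr pair; rewrite addrC addKr.
have Hn : pnorm (psub (a0.1 + s *: p.1, a0.2 + s * p.2) a0) <= del.
  rewrite Hps (pnormZ _ (ltW s0p)).
  rewrite ler_pdivlMr // in sd.
  have := pnorm_ge0 p; nra.
have := Hd _ (HA s s0p ss0) Hn; rewrite Hps (pnormZ _ (ltW s0p)).
have -> : pdot v (s *: p.1, s * p.2) = s * pdot v p.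
  rewrite /pdot /= vdotZr; ring.
by rewrite mulrCA ler_pM2l.
Qed.
End Aux.
Section G.
Variables (R : realType) (d : nat) (g : 'rV[R]_d -> R).
Hypothesis gge0 : forall x, 0 <= g x.
Hypothesis lc : log_concave g.

Lemma lc_exp (w u : 'rV[R]_d) (s : R) : 0 < g w -> 0 < g u -> 0 <= s <= 1 ->
  g u * expR (s * (ln (g w) - ln (g u))) <= g (s *: w + (1 - s) *: u).
Proof.
move=> gw gu s01; apply: le_trans (lc w u s01).
rewrite /powR (gt_eqF gw) (gt_eqF gu).
have -> : g u * expR (s * (ln (g w) - ln (g u))) =
    expR (s * ln (g w)) * expR ((1 - s) * ln (g u)).
  have E : g u = expR (ln (g u)) by rewrite lnK // posrE.
  rewrite {1}E -!expRD; congr expR; ring.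
by [].
Qed.

Lemma supp_conv (w u : 'rV[R]_d) (s : R) : 0 < g w -> 0 < g u -> 0 <= s <= 1 ->
  0 < g (s *: w + (1 - s) *: u).
Proof.
move=> gw gu s01; apply: lt_le_trans (lc_exp gw gu s01).
by rewrite mulr_gt0 // expR_gt0.
Qed.

Lemma t_ge0 (u : 'rV[R]_d) (v : pt R d) : 0 < g u -> frechet_normal (Defs.lift g) (u, g u) v -> 0 <= v.2.
Proof.
move=> gu Hv.
have := @normal_dir R d (Defs.lift g) (u, g u) v (0, -1) (g u) gu _ Hv.
rewrite /pdot /= vdot0r => H.
suff : 0 + v.2 * -1 <= 0 by lra.
apply: H => s s0 sg; rewrite /Defs.lift /= scaler0 addr0; split.
  by apply: subset_closure; exact: gu.
by rewrite ger0_norm; lra.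
Qed.

Lemma testA (u w : 'rV[R]_d) (v : pt R d) : 0 < g u -> 0 < g w -> frechet_normal (Defs.lift g) (u, g u) v ->
  vdot v.1 (w - u) + v.2 * (g u * Num.min 0 (ln (g w) - ln (g u))) <= 0.
Proof.
move=> gu gw Hv.
set L := ln (g w) - ln (g u); set L' := Num.min 0 L.
have L'0 : L' <= 0 by rewrite ge_min lexx.
have L'L : L' <= L by rewrite ge_min lexx orbT.
have L1 : 0 < 1 - L' by lra.
have := @normal_dir R d (Defs.lift g) (u, g u) v (w - u, g u * L') (1 - L')^-1 _ _ Hv.
apply; first by rewrite invr_gt0.
move=> s s0 ss0.
rewrite -div1r ler_pdivlMr // in ss0.
have s1 : s <= 1 by nra.
have Ex : u + s *: (w - u) = s *: w + (1 - s) *: u.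
  by apply/matrixP => i j; rewrite !mxE; ring.
have s01 : 0 <= s <= 1 by rewrite s1 ltW.
rewrite /Defs.lift /= Ex; split.
  by apply: subset_closure; apply: supp_conv.
have e1 := expR_ge1Dx (s * L').
have e2 : expR (s * L') <= expR (s * L) by rewrite ler_expR ler_wpM2l // ltW.
have e3 := expR_gt0 (s * L').
have := lc_exp gw gu s01; rewrite -/L => h.
rewrite ger0_norm; last by nra.
apply: le_trans h; nra.
Qed.

Lemma closure_conv (u w : 'rV[R]_d) (s : R) : closure (supp g) u -> 0 < g w -> 0 < s <= 1 ->
  closure (supp g) (s *: w + (1 - s) *: u).
Proof.
move=> cu gw /andP[s0 s1] B; rewrite -nbhs_nbhs_norm => -[e e0 He].
have Nu : nbhs u [set y | `|u - y| < e] by rewrite -nbhs_nbhs_norm; exists e.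
have [y [sy uy]] := cu _ Nu.
exists (s *: w + (1 - s) *: y); split.
  by apply: supp_conv => //; rewrite s1 ltW.
apply: He => /=.
have -> : s *: w + (1 - s) *: u - (s *: w + (1 - s) *: y) = (1 - s) *: (u - y).
  by apply/matrixP => i j; rewrite !mxE; ring.
rewrite normrZ ger0_norm; last by lra.

move: uy => /= uy; have := normr_ge0 (u - y); nra.
Qed.

Lemma testB (u w : 'rV[R]_d) (v : pt R d) : closure (supp g) u -> g u = 0 -> 0 < g w ->
  frechet_normal (Defs.lift g) (u, g u) v -> vdot v.1 (w - u) <= 0.
Proof.
move=> cu gu0 gw Hv.
have := @normal_dir R d (Defs.lift g) (u, g u) v (w - u, 0) 1 ltr01 _ Hv.
rewrite /pdot /= mulr0 addr0; apply => s s0 s1.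
have Ex : u + s *: (w - u) = s *: w + (1 - s) *: u.
  by apply/matrixP => i j; rewrite !mxE; ring.
rewrite /Defs.lift /= Ex mulr0 addr0 gu0 normr0; split => //.
by apply: closure_conv => //; rewrite s0.
Qed.
End G.
Lemma key (R : realType) d (g : 'rV[R]_d -> R) (psi : 'rV[R]_d -> \bar R)
    (m : \bar R) :
  (forall x, (g x)%:E = expeR (- psi x)%E) -> (exists x, psi x = m) ->
  (forall x, (m <= psi x)%E) -> (psi (0%R : 'rV[R]_d) < m + 1%:E)%E ->
  0 < g 0 ->
  exists2 eta : R, 0 < eta &
    forall x, 0 < g x -> ln (g x) <= ln (g 0) + 1 - eta.
Proof.
move=> hg [x0 hx0] hm h0 g0.
have fin : forall x, 0 < g x -> exists q : R, psi x = q%:E /\ ln (g x) = - q.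
  move=> x gx; have := hg x; case E: (psi x) => [q| |] /=.
  - by move=> [->]; exists q; split => //; rewrite expRK.
  - by move=> [gx0]; rewrite gx0 ltxx in gx.
  - by [].
have [p0 [hp0 lg0]] := fin _ g0.
case Em: m => [m'| |].
- exists (m' + 1 - p0).
    by move: h0; rewrite hp0 Em -EFinD lte_fin => h0; lra.
  move=> x gx; have [q [hq lgx]] := fin _ gx.
  have := hm x; rewrite hq Em lee_fin => mq.
  by rewrite lgx lg0; lra.
- by have := hm 0; rewrite Em hp0 leNgt ltry.
- by have := hg x0; rewrite hx0 Em.
Qed.
Theorem mainTheorem16 (R : realType) (d : nat) (g : 'rV[R]_d -> R)
    (psi : 'rV[R]_d -> \bar R) (m : \bar R) :
  basic_assumptions g ->
  (forall x, (g x)%:E = expeR (- psi x)%E) ->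
  (exists x, psi x = m) -> (forall x, (m <= psi x)%E) ->
  (psi (0%R : 'rV[R]_d) < m + 1%:E)%E ->
  star_like (supp g) g /\
  (forall U : set 'rV[R]_d,
     (exists2 c : R, 0 < c & forall x, U x -> supp g x -> c <= g x) ->
     exists M : R, forall uv : pt R d * pt R d,
       reduced_contact_pairs g g uv -> U uv.1.1 ->
       pnorm uv.1 <= M /\ pnorm uv.2 <= M).
Proof.
move=> [gge0 [_ [lc [_ [[Bs hBs] int0]]]]] hg hx0 hm h0.
have g0 : 0 < g 0 := nbhs_singleton int0.
have [eta eta0 heta] := key hg hx0 hm h0 g0.
have [e e0 He] : exists2 e : R, 0 < e & forall y, `|y| < e -> 0 < g y.
  move: int0; rewrite /interior /= -nbhs_nbhs_norm => -[e e0 He].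
  by exists e => // y hy; apply: He => /=; rewrite sub0r normrN.
set rho := e / 2.
have rho0 : 0 < rho by rewrite divr_gt0.
pose w := fun (i : 'I_d) (b : bool) =>
  (if b then rho else - rho) *: (delta_mx 0 i : 'rV[R]_d).
have gw : forall i b, 0 < g (w i b).
  move=> i b; apply: He; rewrite normrZ.
  have hd : `|delta_mx 0 i : 'rV[R]_d| <= 1.
    rewrite [X in X <= _]/Num.Def.normr /= mx_normrE; apply: bigmax_le => // -[a j] _ /=.
    by rewrite mxE; case: (_ && _); rewrite ?normr1 ?normr0.
  have -> : `|if b then rho else - rho| = rho.
    by case: b; rewrite ?normrN ger0_norm // ltW.
  have := normr_ge0 (delta_mx 0 i : 'rV[R]_d).
  rewrite /rho; nra.
have vw : forall (v : 'rV[R]_d) i b,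
    vdot v (w i b) = (if b then rho else - rho) * v 0 i.
  by move=> v i b; exact: vdot_delta.
split.
  move=> u _ gu [v1 t] v0 Hv.
  rewrite /supp /= in gu.
  have t0 : 0 <= t := t_ge0 gu Hv.
  rewrite /pdot /=.
  have [tp|tle] := ltrP 0 t.
    have := testA lc gu g0 Hv; rewrite /= sub0r vdotNr vdotC.
    set L' := Num.min 0 _.
    have hL : -1 < L'.
      rewrite lt_min; apply/andP; split; first by lra.
      by have := heta u gu; lra.
    move=> h.
    have hp : 0 < 1 + L' by lra.
    have := mulr_gt0 (mulr_gt0 tp gu) hp.
    nra.
  have t00 : t = 0 by apply/le_anti; rewrite tle t0.
  subst t.
  have v10 : v1 != 0.
    by apply: contraNneq v0 => ->.
  have [i vi] : exists i, v1 0 i != 0.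
    apply/existsP; apply: contraNT v10 => /existsPn H.
    apply/eqP/matrixP => a j; rewrite (ord1 a) mxE; exact/eqP/negPn/H.
  have := testA lc gu (gw i (0 < v1 0 i)) Hv.
  rewrite /= mul0r addr0 vdotBr vw vdotC.
  case: ltrP => vp.
    have := mulr_gt0 rho0 vp; lra.
  have vn : v1 0 i < 0 by rewrite lt_neqAle vi vp.
  have hp : 0 < - v1 0 i by lra.
  have := mulr_gt0 rho0 hp; lra.
move=> U [c c0 hc].
have hcl : forall x, closure (supp g) x -> forall i, `|x 0 i| <= Bs + 1.
  move=> x cx i.
  have N : nbhs x [set y | `|x - y| < 1].
    rewrite -nbhs_nbhs_norm; exists 1; [exact: ltr01|by []].
  have [y [sy xy]] := cx _ N.
  have hy := hBs y sy; rewrite /vnorm in hy.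
  have vy := vdot_ge0 y.
  have hy2 : vdot y y <= Bs ^+ 2.
    rewrite -(sqr_sqrtr vy); apply: lerXn2r => //; rewrite ?nnegrE ?sqrtr_ge0 //.
    by apply: le_trans hy; exact: sqrtr_ge0.
  have Bs0 : 0 <= Bs by apply: le_trans hy; exact: sqrtr_ge0.
  have hyi := vdot_coord y i.
  have hxy : `|(x - y) 0 i| <= `|x - y|.
    rewrite [leRHS]/Num.Def.normr /= mx_normrE; apply/bigmax_geP; right => /=.
    by exists (0, i).
  move: hxy; rewrite !mxE => hxy; move: xy => /= xy.
  rewrite ler_norml; move: hxy; rewrite ler_norml => /andP[h1 h2].
  apply/andP; split; nra.
pose eta' := Num.min 1 eta.
have eta'0 : 0 < eta' by rewrite lt_min ltr01 eta0.
pose lnG := ln (g 0) + 1 - eta.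
pose G := expR lnG.
have hG : forall x, 0 <= g x <= G.
  move=> x; rewrite gge0 /=; have [gx|] := ltrP 0 (g x).
    by rewrite -[g x]lnK ?posrE // ler_expR heta.
  by move=> h; apply: le_trans h _; rewrite ltW // expR_gt0.
pose kap := fun i => Num.min (g (w i true)) (g (w i false)).
have kap0 : forall i, 0 < kap i by move=> i; rewrite lt_min !gw.
have kapw : forall i b, kap i <= g (w i b).
  by move=> i [|]; rewrite ge_min lexx ?orbT.
pose D := fun i => Num.max 0 (lnG - ln (kap i)).
have D0 : forall i, 0 <= D i by move=> i; rewrite le_max lexx.
have Dge : forall i, lnG - ln (kap i) <= D i by move=> i; rewrite le_max lexx orbT.
pose DX := fun i => D i / eta'.
have DX0 : forall i, 0 <= DX i by move=> i; rewrite divr_ge0 // ltW.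
have DXe : forall i, D i = DX i * eta' by move=> i; rewrite /DX divfK // gt_eqF.
pose Bi := fun i => (1 + DX i) / rho.
pose T := 1 / (c * eta').
have T0 : 0 <= T by rewrite divr_ge0 // ltW // mulr_gt0.
pose M1 := Num.sqrt (\sum_(i < d) (Bs + 1) ^+ 2 + G ^+ 2).
pose M2 := Num.sqrt (\sum_(i < d) Bi i ^+ 2 + T ^+ 2).
exists (Num.max M1 M2).
move=> [[u' gu'] [v1 t]] [[u [E1 [cu [_ [_ [Hv [_ Hpd]]]]]]] Hred] Uu.
case: E1 => E1 E2; subst u' gu'.
move: Hred Hpd Uu; rewrite /= => Hred Hpd Uu.
rewrite /pdot /= in Hpd.
have hv : (forall i, `|v1 0 i| <= Bi i) /\ `|t| <= T.
  case: Hred => [gun|[gu0 [_ t00]]].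
    have gu : 0 < g u by rewrite lt_def gun gge0.
    have cgu : c <= g u by apply: hc.
    have t0 : 0 <= t := t_ge0 gu Hv.
    have h0' := testA lc gu g0 Hv; rewrite /= sub0r vdotNr in h0'.
    set L0 := Num.min 0 _ in h0'.
    have hL0 : eta' - 1 <= L0.
      rewrite le_min; apply/andP; split.
        have : eta' <= 1 by rewrite ge_min lexx.
        lra.
      have : eta' <= eta by rewrite ge_min lexx orbT.
      by have := heta u gu; lra.
    have tg0 : 0 <= t * g u by rewrite mulr_ge0 // ltW.
    have tge : t * g u * eta' <= 1 by nra.
    split.
      move=> i.
      have hA : forall b, (if b then rho else - rho) * v1 0 i <= 1 + DX i.
        move=> b; have := testA lc gu (gw i b) Hv.
        rewrite /= vdotBr vw.
        set Lb := Num.min 0 _.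
        have hLb : - D i <= Lb.
          rewrite le_min; apply/andP; split; first by have := D0 i; lra.
          have := Dge i.
          have : ln (kap i) <= ln (g (w i b)) by rewrite ler_ln ?posrE.
          have : ln (g u) <= lnG by exact: heta.
          lra.
        have := DXe i; have := DX0 i.
        move=> h1 h2 h3.
        have : t * g u * D i <= DX i by rewrite h2; nra.
        have hLb' : 0 <= Lb + D i by lra.
        have := mulr_ge0 tg0 hLb'.
        rewrite mulrA in h3.
        move: (t * g u) tg0 Hpd h3 => X hX Hpd' h3'.
        move=> q1 q2; move: (if b then rho else - rho) h3' => r h3'; rewrite mulrDr in q1; lra.
      rewrite /Bi ler_pdivlMr //.
      have := hA true; have := hA false => /= h1 h2.
      have [vi0|vi0] := lerP 0 (v1 0 i).
        by rewrite ger0_norm //; nra.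
      by rewrite ltr0_norm //; nra.
    rewrite ger0_norm // /T ler_pdivlMr ?mulr_gt0 //.
    have := mulr_ge0 t0 (ltW eta'0); nra.
  subst t; split; last by rewrite normr0.
  move=> i.
  have hB : forall b, (if b then rho else - rho) * v1 0 i <= 1.
    move=> b; have := testB gge0 lc cu gu0 (gw i b) Hv.
    rewrite vdotBr vw; move: Hpd; rewrite mul0r addr0.
    move: (if b then rho else - rho) => r; lra.
  rewrite /Bi ler_pdivlMr //.
  have := hB true; have := hB false => /= h1 h2.
  have := DX0 i => h3.
  have [vi0|vi0] := lerP 0 (v1 0 i).
    by rewrite ger0_norm //; nra.
  by rewrite ltr0_norm //; nra.
case: hv => hvi ht.
split.
  apply: (@le_trans _ _ M1); last by rewrite le_max lexx.
  rewrite /pnorm /pdot /=; apply: ler_wsqrtr; apply: lerD.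
    rewrite /vdot; apply: ler_sum => i _.
    have := hcl u cu i; rewrite ler_norml => /andP[a1 a2]; nra.
  have := hG u => /andP[a1 a2]; nra.
apply: (@le_trans _ _ M2); last by rewrite le_max lexx orbT.
rewrite /pnorm /pdot /=; apply: ler_wsqrtr; apply: lerD.
  rewrite /vdot; apply: ler_sum => i _.
  have := hvi i; rewrite ler_norml => /andP[a1 a2]; nra.
move: ht; rewrite ler_norml => /andP[a1 a2]; nra.
Qed.
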